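(* Let $L=2\pi$ and let $A:D(A)\subset L^2(0,L)\to L^2(0,L)$ be defined by $A\varphi=-\varphi_x-\varphi_{xxx}$ with $D(A)=\{\varphi\in H^3(0,L):\varphi(0)=\varphi(L)=\varphi_x(L)=0\}$. Then $\sigma_p(A)\cap i\mathbb R=\{0\}$. Moreover, the kernel of $A$ is $\{a(1-\cos x): a\in\mathbb R\}$.
   Context: Point spectrum is taken for the complexification of $A$. *)

(* Defs.v *)
From HB Require Import structures.
From mathcomp Require Import all_boot all_order all_algebra.
From mathcomp Require Import all_classical all_reals all_analysis.
Set Implicit Arguments. Unset Strict Implicit. Unset Printing Implicit Defensive.
Import Order.TTheory GRing.Theory Num.Theory.
Local Open Scope classical_set_scope.
Local Open Scope ring_scope.

Section KdV.
Variable R : realType.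
Local Notation leb := (@lebesgue_measure R).

Definition Lper : R := 2 * pi.

(* the interval [0,L] (open vs closed differs by a null set) *)
Definition I0L : set R := `[0, Lper]%classic.

Definition L2 (g : R -> R) : Prop :=
  measurable_fun I0L g /\
  (\int[leb]_(x in I0L) ((g x) ^+ 2)%:E < +oo)%E.

Definition aeq (f g : R -> R) : Prop :=
  {ae leb, forall x, I0L x -> f x = g x}.

(* phi in H^3(0,L) with weak derivatives phi1, phi2, phi3, via the standard
   absolutely continuous representative:
   phi^(k)(x) = phi^(k)(0) + int_0^x phi^(k+1), for x in [0,L], phi3 in L^2. *)
Definition H3_with (phi phi1 phi2 phi3 : R -> R) : Prop :=
  L2 phi3 /\
  leb.-integrable I0L (EFin \o phi3) /\
  leb.-integrable I0L (EFin \o phi2) /\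
  leb.-integrable I0L (EFin \o phi1) /\
  (forall x, I0L x -> phi2 x = phi2 0 + Rintegral leb `[0, x] phi3) /\
  (forall x, I0L x -> phi1 x = phi1 0 + Rintegral leb `[0, x] phi2) /\
  (forall x, I0L x -> phi x = phi 0 + Rintegral leb `[0, x] phi1).

(* Graph of A: phi in D(A) and A phi = psi in L^2(0,L), where
   A phi = - phi_x - phi_xxx and
   D(A) = {phi in H^3(0,L) : phi(0) = phi(L) = phi_x(L) = 0}. *)
Definition A_graph (phi psi : R -> R) : Prop :=
  exists phi1 phi2 phi3,
    H3_with phi phi1 phi2 phi3 /\
    phi 0 = 0 /\ phi Lper = 0 /\ phi1 Lper = 0 /\
    aeq psi (fun x => - phi1 x - phi3 x).

(* i*mu (mu real) is in the point spectrum of the complexification of A: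
   there is u + i v in D(A_C), nonzero in L^2, with
   A(u + i v) = i mu (u + i v), i.e. A u = - mu v and A v = mu u. *)
Definition imag_eigenvalue (mu : R) : Prop :=
  exists u v : R -> R,
    ~ (aeq u (fun=> 0) /\ aeq v (fun=> 0)) /\
    A_graph u (fun x => - mu * v x) /\
    A_graph v (fun x => mu * u x).

End KdV.

(* Main.v *)
Require Import Defs.
From HB Require Import structures.
From mathcomp Require Import all_boot all_order all_algebra.
From mathcomp Require Import all_classical all_reals all_analysis.
From mathcomp Require Import ring lra zify.
From mathcomp Require Import measurable_realfun.
Import Order.TTheory GRing.Theory Num.Theory.
Import numFieldNormedType.Exports.
Set Implicit Arguments. Unset Strict Implicit. Unset Printing Implicit Defensive.
Local Open Scope classical_set_scope.
Local Open Scope ring_scope.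

Lemma intl (x w : int) : 3 * x ^+ 2 + w ^+ 2 = 12 -> w * (w ^+ 2 - 9) = 0.
Proof.
move=> h.
have hw : -3 <= w <= 3 by apply/andP; split; nia.
have hx : -2 <= x <= 2 by apply/andP; split; nia.
move: h.
have [->|[->|[->|[->|[->|[->|->]]]]]] : w = -3 \/ w = -2 \/ w = -1 \/ w = 0 \/ w = 1 \/ w = 2 \/ w = 3 by lia.
all: have [->|[->|[->|[->|->]]]] : x = -2 \/ x = -1 \/ x = 0 \/ x = 1 \/ x = 2 by lia.
all: rewrite !expr2 => hh; lia.
Qed.

Section Proof1.
Variable R : realType.
Local Notation leb := (@lebesgue_measure R).
Local Notation L := (Lper R).
Local Notation I := (@I0L R).

Definition Cw (f : R -> R) := {within `[0, L]%classic, continuous f}.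
Definition Dr (f f' : R -> R) := forall x, x \in `]0, L[ -> is_derive x 1 f (f' x).

Lemma L_gt0 : 0 < L.
Proof. by rewrite /Lper mulr_gt0 // pi_gt0. Qed.

Lemma Cw_interior f x : Cw f -> x \in `]0, L[ -> {for x, continuous f}.
Proof. by move=> /(continuous_within_itvP _ L_gt0) [h _ _]; apply: h. Qed.

Lemma Cw_ext f g : (forall x, I x -> f x = g x) -> Cw f -> Cw g.
Proof.
move=> fg; apply: subspace_eq_continuous => x; rewrite inE => /fg //.
Qed.

Lemma CwD f g : Cw f -> Cw g -> Cw (fun x => f x + g x).
Proof. by move=> cf cg x; exact: (cvgD (cf x) (cg x)). Qed.
Lemma CwM f g : Cw f -> Cw g -> Cw (fun x => f x * g x).
Proof. by move=> cf cg x; exact: (cvgM (cf x) (cg x)). Qed.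
Lemma CwN f : Cw f -> Cw (fun x => - f x).
Proof. by move=> cf x; exact: (cvgN (cf x)). Qed.
Lemma Cw_cst c : Cw (fun=> c).
Proof. by move=> x; exact: cvg_cst. Qed.
Lemma CwZ c f : Cw f -> Cw (fun x => c * f x).
Proof. by move=> cf; apply: CwM => //; exact: Cw_cst. Qed.
Lemma CwB f g : Cw f -> Cw g -> Cw (fun x => f x - g x).
Proof. by move=> cf cg; apply: CwD => //; exact: CwN. Qed.

Lemma int_Cw (f F : R -> R) (c : R) : leb.-integrable `[0, L] (EFin \o f) ->
  (forall x, I x -> F x = c + \int[leb]_(t in `[0, x]) f t) -> Cw F.
Proof.
move=> intf HF.
have HG := parameterized_integral_continuous (ltW L_gt0) intf.
apply: (@Cw_ext (fun x => c + parameterized_integral leb 0 x f) F).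
  by move=> x /HF ->.
by apply: CwD => //; exact: Cw_cst.
Qed.

Lemma Cw_integrable f : Cw f -> leb.-integrable `[0, L] (EFin \o f).
Proof. by move=> cf; apply: continuous_compact_integrable => //; exact: segment_compact. Qed.

Lemma iD (x : R) (f g : R -> R) (df dg : R) : is_derive x 1 f df -> is_derive x 1 g dg ->
  is_derive x 1 (fun y => f y + g y) (df + dg).
Proof. by move=> hf hg; exact: (is_deriveD hf hg). Qed.
Lemma iM (x : R) (f g : R -> R) (df dg : R) : is_derive x 1 f df -> is_derive x 1 g dg ->
  is_derive x 1 (fun y => f y * g y) (df * g x + f x * dg).
Proof.
move=> hf hg; have H := is_deriveM hf hg.
suff -> : df * g x + f x * dg = f x *: dg + g x *: df by exact: H.
by rewrite /GRing.scale /= [g x * _]mulrC addrC.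
Qed.
Lemma iN (x : R) (f : R -> R) (df : R) : is_derive x 1 f df ->
  is_derive x 1 (fun y => - f y) (- df).
Proof. by move=> hf; exact: (is_deriveN hf). Qed.
Lemma iC (x : R) (c : R) : is_derive x 1 (fun=> c) 0.
Proof. exact: is_derive_cst. Qed.
Lemma iI (x : R) : is_derive x 1 (fun y : R => y) 1.
Proof. exact: is_derive_id. Qed.

Lemma Dr_int (f F : R -> R) (c : R) : Cw f ->
  (forall x, I x -> F x = c + \int[leb]_(t in `[0, x]) f t) -> Dr F f.
Proof.
move=> cf HF x xin.
have intf := Cw_integrable cf.
have x0 : 0 < x by rewrite (itvP xin).
have xL : x < L by rewrite (itvP xin).
have [d1 d2] := continuous_FTC1_closed xL intf x0 (Cw_interior cf xin).
set G := (fun x0 : R => \int[leb]_(t in `[0, x0]) f t) in d1 d2.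
have dG : is_derive x 1 G (f x).
  by rewrite -d2 derive1E; apply: derivableP.
have dcG : is_derive x 1 (fun y => c + G y) (f x).
  by have := iD (iC x c) dG; rewrite add0r.
apply: near_eq_is_derive dcG.
near=> y; rewrite HF //.
have : y \in `]0, L[ by near: y; exact: near_in_itvoo.
rewrite in_itv /= => /andP[/ltW h1 /ltW h2].
by rewrite /I0L /= in_itv /= h1 h2.
Unshelve. all: by end_near. Qed.


Lemma Isub x y : I x -> y \in `[0, x] -> I y.
Proof.
rewrite /I0L /= !in_itv /= => /andP[x0 xL] /andP[y0 yx].
by rewrite y0 (le_trans yx xL).
Qed.

Lemma reg phi phi1 phi2 phi3 : H3_with phi phi1 phi2 phi3 ->
  [/\ Cw phi2, Cw phi1, Cw phi, Dr phi1 phi2 & Dr phi phi1].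
Proof.
move=> [_ [i3 [i2 [i1 [e2 [e1 e0]]]]]].
have c2 : Cw phi2 by exact: (int_Cw i3 e2).
have c1 : Cw phi1 by exact: (int_Cw i2 e1).
have c0 : Cw phi by exact: (int_Cw i1 e0).
split => //; [exact: (Dr_int c2 e1)|exact: (Dr_int c1 e0)].
Qed.

Lemma reg2 phi phi1 phi2 phi3 g : H3_with phi phi1 phi2 phi3 -> Cw g ->
  aeq g (fun x => - phi1 x - phi3 x) -> Dr phi2 (fun x => - g x - phi1 x).
Proof.
move=> H cg ae.
have [_ c1 _ _ _] := reg H.
move: H => [_ [i3 [i2 [i1 [e2 [e1 e0]]]]]].
have ch : Cw (fun x => - g x - phi1 x) by apply: CwB => //; exact: CwN.
apply: (Dr_int ch) => x xI.
rewrite e2 //; congr (_ + _); rewrite /Rintegral; congr fine.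
have sub : `[0, x] `<=` `[0, L].
  by move=> y yin; exact: (Isub xI yin).
apply: ae_eq_integral => //.
- apply: measurable_funS (sub) _ => //.
  by case/integrableP: i3.
- apply: measurable_funS (sub) _ => //.
  by case/integrableP: (Cw_integrable ch).
- apply: filterS ae; first exact: (ae_filter_ringOfSetsType leb).
  move=> y Hy yin.
  have yI : I y by apply: sub.
  rewrite /= (Hy yI); congr EFin; lra.
Qed.


Lemma DrE f f' g' : Dr f f' -> (forall x, x \in `]0, L[ -> f' x = g' x) -> Dr f g'.
Proof. by move=> df e x xin; rewrite -e //; exact: df. Qed.

Lemma mono f f' : Cw f -> Dr f f' -> (forall x, x \in `]0, L[ -> f' x <= 0) ->
  forall x, I x -> f x <= f 0.
Proof.
move=> cf df neg x; rewrite /I0L /= in_itv /= => /andP[x0 xL].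
have [->|xpos] := eqVneq x 0; first by [].
have x0' : 0 < x by rewrite lt_def xpos x0.
have sub : `]0, x[ `<=` `]0, L[.
  by move=> y; rewrite /= !in_itv /= => /andP[-> /lt_le_trans ->].
have [c cin hc] : exists2 c, c \in `]0, x[ & f x - f 0 = f' c * (x - 0).
  apply: MVT => //.
    by move=> y yin; apply: df; apply: sub.
  apply: continuous_subspaceW cf.
  by move=> y; rewrite /= !in_itv /= => /andP[-> /le_trans ->].
suff : f' c * (x - 0) <= 0 by rewrite -hc subr_le0.
by rewrite subr0 mulr_le0_ge0 //; first (apply: neg; apply: sub); exact: ltW.
Qed.

Lemma const f : Cw f -> Dr f (fun=> 0) -> forall x, I x -> f x = f 0.
Proof.
move=> cf df x xI; apply/eqP; rewrite eq_le (mono cf df) //=.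
have cN : Cw (fun x => - f x) by exact: CwN.
have dN : Dr (fun x => - f x) (fun=> 0).
  by move=> y yin; have := iN (df y yin); rewrite oppr0.
by have := mono cN dN (fun _ _ => lexx 0) xI; rewrite lerN2.
Qed.

Lemma Cw_deriv (f : R -> R) : (forall x : R, derivable f x 1) -> Cw f.
Proof. by move=> d; apply: derivable_within_continuous => x _; exact: d. Qed.

Lemma iE (c x : R) : is_derive x 1 (fun y => expR (c * y)) (c * expR (c * x)).
Proof.
have h1 : is_derive x 1 (fun y => c * y) c.
  by have := iM (iC x c) (iI x); rewrite mul0r add0r mulr1.
have := is_derive1_comp (is_derive_expR (c * x)) h1.
by rewrite mulrC.
Qed.


Ltac dtac := repeat first [ apply: iD | apply: iM | apply: iN | apply: iC | apply: iI | eassumption ].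

Ltac cwtac := repeat first [ apply: CwD | apply: CwM | apply: CwN | apply: Cw_cst | eassumption ].

Definition sys (mu : R) (u u1 u2 v v1 v2 : R -> R) :=
  (Cw u /\ Cw u1 /\ Cw u2 /\ Cw v /\ Cw v1 /\ Cw v2) /\
  (Dr u u1 /\ Dr u1 u2 /\ Dr u2 (fun x => mu * v x - u1 x) /\ Dr v v1 /\ Dr v1 v2
    /\ Dr v2 (fun x => - mu * u x - v1 x)).

Lemma uniq3 mu u u1 u2 v v1 v2 : sys mu u u1 u2 v v1 v2 ->
  u 0 = 0 -> u1 0 = 0 -> u2 0 = 0 -> v 0 = 0 -> v1 0 = 0 -> v2 0 = 0 ->
  forall x, I x -> u x = 0 /\ u1 x = 0 /\ u2 x = 0 /\ v x = 0 /\ v1 x = 0 /\ v2 x = 0.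
Proof.
move=> [[cu [cu1 [cu2 [cv [cv1 cv2]]]]] [du [du1 [du2 [dv [dv1 dv2]]]]]] h1 h2 h3 h4 h5 h6.
pose C := 2 + mu ^+ 2.
pose E x := u x * u x + u1 x * u1 x + u2 x * u2 x + v x * v x + v1 x * v1 x + v2 x * v2 x.
pose S x := (u x - u1 x) ^+ 2 + (mu * u2 x - v x) ^+ 2
  + (v x - v1 x) ^+ 2 + (mu * v2 x + u x) ^+ 2
  + (mu * u x) ^+ 2 + u1 x ^+ 2 + (mu * u1 x) ^+ 2 + u2 x ^+ 2 + u2 x ^+ 2
  + (mu * v x) ^+ 2 + v1 x ^+ 2 + (mu * v1 x) ^+ 2 + v2 x ^+ 2 + v2 x ^+ 2.
pose G x := E x * expR (- C * x).
have cE : Cw E by rewrite /E; repeat apply: CwD; apply: CwM.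
have cG : Cw G.
  apply: CwM => //; apply: Cw_deriv => y.
  by have [] := iE (- C) y.
have dG : Dr G (fun x => - S x * expR (- C * x)).
  move=> x xin.
  have := du x xin; have := du1 x xin; have := du2 x xin.
  have := dv x xin; have := dv1 x xin; have := dv2 x xin; have := iE (- C) x.
  move=> ? ? ? ? ? ? ?.
  apply: is_derive_eq; rewrite /G /E; dtac.
  rewrite /S /C /GRing.scale /=; ring.
have S0 x : 0 <= S x.
  by rewrite /S; repeat apply: addr_ge0; exact: sqr_ge0.
have G0 : G 0 = 0.
  by rewrite /G /E h1 h2 h3 h4 h5 h6 !(mul0r, addr0).
move=> y yI.
have Gy : G y <= 0.
  rewrite -G0; apply: (mono cG dG _ yI) => z _.
  by rewrite mulNr oppr_le0 mulr_ge0 // expR_ge0.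
have E0 : E y = 0.
  have Ege : 0 <= E y by rewrite /E; nra.
  have ep := expR_gt0 (- C * y).
  have Ele : E y <= 0 by move: Gy; rewrite /G; nra.
  by apply/eqP; rewrite eq_le Ele Ege.
move: E0; rewrite /E => E0.
have a1 : u y * u y = 0 by nra.
have a2 : u1 y * u1 y = 0 by nra.
have a3 : u2 y * u2 y = 0 by nra.
have a4 : v y * v y = 0 by nra.
have a5 : v1 y * v1 y = 0 by nra.
have a6 : v2 y * v2 y = 0 by nra.
have sq0 (a : R) : a * a = 0 -> a = 0 by move/eqP; rewrite mulf_eq0 orbb => /eqP.
by rewrite (sq0 _ a1) (sq0 _ a2) (sq0 _ a3) (sq0 _ a4) (sq0 _ a5) (sq0 _ a6).
Qed.


Lemma L_I : I L.
Proof. by rewrite /I0L /= in_itv /= lexx (ltW L_gt0). Qed.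
Lemma zero_I : I 0.
Proof. by rewrite /I0L /= in_itv /= lexx (ltW L_gt0). Qed.

Lemma energy mu u u1 u2 v v1 v2 : sys mu u u1 u2 v v1 v2 ->
  u 0 = 0 -> v 0 = 0 -> u L = 0 -> v L = 0 -> u1 L = 0 -> v1 L = 0 ->
  u1 0 = 0 /\ v1 0 = 0.
Proof.
move=> [[cu [cu1 [cu2 [cv [cv1 cv2]]]]] [du [du1 [du2 [dv [dv1 dv2]]]]]] h1 h2 h3 h4 h5 h6.
pose F x := 2 * (u x * u2 x) - u1 x * u1 x + u x * u x
  + 2 * (v x * v2 x) - v1 x * v1 x + v x * v x.
have cF : Cw F.
  by rewrite /F; cwtac.
have dF : Dr F (fun=> 0).
  move=> x xin.
  have := du x xin; have := du1 x xin; have := du2 x xin.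
  have := dv x xin; have := dv1 x xin; have := dv2 x xin.
  move=> ? ? ? ? ? ?.
  apply: is_derive_eq; rewrite /F; dtac.
  rewrite /GRing.scale /=; ring.
have := const cF dF L_I; rewrite /F h1 h2 h3 h4 h5 h6 => e.
split; nra.
Qed.

Lemma adj mu u u1 u2 v v1 v2 p p1 p2 q q1 q2 :
  sys mu u u1 u2 v v1 v2 -> sys (- mu) p p1 p2 q q1 q2 ->
  let K x := p x * u2 x - p1 x * u1 x + (p2 x + p x) * u x
    - q x * v2 x + q1 x * v1 x - (q2 x + q x) * v x in
  K L = K 0.
Proof.
move=> [[cu [cu1 [cu2 [cv [cv1 cv2]]]]] [du [du1 [du2 [dv [dv1 dv2]]]]]].
move=> [[cp [cp1 [cp2 [cq [cq1 cq2]]]]] [dp [dp1 [dp2 [dq [dq1 dq2]]]]]] K.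
have cK : Cw K.
  by rewrite /K; cwtac.
have dK : Dr K (fun=> 0).
  move=> x xin.
  have := du x xin; have := du1 x xin; have := du2 x xin.
  have := dv x xin; have := dv1 x xin; have := dv2 x xin.
  have := dp x xin; have := dp1 x xin; have := dp2 x xin.
  have := dq x xin; have := dq1 x xin; have := dq2 x xin.
  move=> ? ? ? ? ? ? ? ? ? ? ? ?.
  apply: is_derive_eq; rewrite /K; dtac.
  rewrite /GRing.scale /=; ring.
exact: (const cK dK L_I).
Qed.


Definition ef (c d a b : R) (x : R) := expR (c * x) * (a * cos (d * x) + b * sin (d * x)).

Lemma icos (d x : R) : is_derive x 1 (fun y => cos (d * y)) (- sin (d * x) * d).
Proof.
have h1 : is_derive x 1 (fun y => d * y) d.
  by have := iM (iC x d) (iI x); rewrite mul0r add0r mulr1.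
exact: (is_derive1_comp (is_derive_cos (d * x)) h1).
Qed.

Lemma isin (d x : R) : is_derive x 1 (fun y => sin (d * y)) (cos (d * x) * d).
Proof.
have h1 : is_derive x 1 (fun y => d * y) d.
  by have := iM (iC x d) (iI x); rewrite mul0r add0r mulr1.
exact: (is_derive1_comp (is_derive_sin (d * x)) h1).
Qed.

Lemma ief c d a b (x : R) : is_derive x 1 (ef c d a b) (ef c d (c * a + d * b) (c * b - d * a) x).
Proof.
have := iE c x; have := icos d x; have := isin d x => ? ? ?.
apply: is_derive_eq; rewrite /ef; dtac.
rewrite /GRing.scale /=; ring.
Qed.

Lemma Cw_ef c d a b : Cw (ef c d a b).
Proof. by apply: Cw_deriv => y; have [] := ief c d a b y. Qed.

Lemma Dr_ef c d a b a' b' : a' = c * a + d * b -> b' = c * b - d * a ->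
  Dr (ef c d a b) (ef c d a' b').
Proof. by move=> -> -> x _; exact: ief. Qed.

Lemma ef_lin c d a b a' b' k x :
  ef c d a b x + k * ef c d a' b' x = ef c d (a + k * a') (b + k * b') x.
Proof. rewrite /ef; ring. Qed.

Lemma ef_eq c d a b a' b' x : a = a' -> b = b' -> ef c d a b x = ef c d a' b' x.
Proof. by move=> -> ->. Qed.

Lemma Dr_ef2 c d a b g : (forall x, ef c d (c * a + d * b) (c * b - d * a) x = g x) ->
  Dr (ef c d a b) g.
Proof. by move=> e x _; rewrite -e; exact: ief. Qed.

Lemma adj_sys mu c d : c ^+ 3 - 3 * c * d ^+ 2 = - c ->
  3 * c ^+ 2 * d - d ^+ 3 = mu - d ->
  sys (- mu) (ef c d 1 0) (ef c d c (- d)) (ef c d (c ^+ 2 - d ^+ 2) (- (2 * c * d)))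
             (ef c d 0 1) (ef c d d c) (ef c d (2 * c * d) (c ^+ 2 - d ^+ 2)) /\
  sys (- mu) (ef c d 0 1) (ef c d d c) (ef c d (2 * c * d) (c ^+ 2 - d ^+ 2))
             (ef c d (-1) 0) (ef c d (- c) d) (ef c d (- (c ^+ 2 - d ^+ 2)) (2 * c * d)).
Proof.
move=> hc hd.
have C6 : forall a1 b1 a2 b2 a3 b3 a4 b4 a5 b5 a6 b6,
  Cw (ef c d a1 b1) /\ Cw (ef c d a2 b2) /\ Cw (ef c d a3 b3) /\ Cw (ef c d a4 b4)
  /\ Cw (ef c d a5 b5) /\ Cw (ef c d a6 b6).
  by move=> *; do 5 (split; first exact: Cw_ef); exact: Cw_ef.
split; (split; first exact: C6).
- split; first by apply: Dr_ef; ring.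
  split; first by apply: Dr_ef; ring.
  split.
    apply: Dr_ef2 => x; transitivity (ef c d (- c) (d - mu) x).
      by rewrite /ef; congr (_ * (_ * _ + _ * _)); nra.
    by rewrite /ef; ring.
  split; first by apply: Dr_ef; ring.
  split; first by apply: Dr_ef; ring.
  apply: Dr_ef2 => x; transitivity (ef c d (mu - d) (- c) x).
    by rewrite /ef; congr (_ * (_ * _ + _ * _)); nra.
  by rewrite /ef; ring.
- split; first by apply: Dr_ef; ring.
  split; first by apply: Dr_ef; ring.
  split.
    apply: Dr_ef2 => x; transitivity (ef c d (mu - d) (- c) x).
      by rewrite /ef; congr (_ * (_ * _ + _ * _)); nra.
    by rewrite /ef; ring.
  split; first by apply: Dr_ef; ring.
  split; first by apply: Dr_ef; ring.
  apply: Dr_ef2 => x; transitivity (ef c d c (mu - d) x).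
    by rewrite /ef; congr (_ * (_ * _ + _ * _)); nra.
  by rewrite /ef; ring.
Qed.


Lemma ef0 c d a b : ef c d a b 0 = a.
Proof. by rewrite /ef !mulr0 expR0 cos0 sin0 mul1r mulr1 mulr0 addr0. Qed.

Lemma rot_eq mu u u1 u2 v v1 v2 c d : sys mu u u1 u2 v v1 v2 ->
  u 0 = 0 -> u1 0 = 0 -> v 0 = 0 -> v1 0 = 0 ->
  u L = 0 -> u1 L = 0 -> v L = 0 -> v1 L = 0 ->
  c ^+ 3 - 3 * c * d ^+ 2 = - c -> 3 * c ^+ 2 * d - d ^+ 3 = mu - d ->
  u2 0 = expR (c * L) * (cos (d * L) * u2 L - sin (d * L) * v2 L) /\
  v2 0 = expR (c * L) * (sin (d * L) * u2 L + cos (d * L) * v2 L).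
Proof.
move=> H z1 z2 z3 z4 z5 z6 z7 z8 hc hd.
have [s1 s2] := adj_sys hc hd.
have k1 := adj H s1; have k2 := adj H s2.
move: k1 k2 => /=; rewrite !ef0 z1 z2 z3 z4 z5 z6 z7 z8 /ef => k1 k2.
split.
- rewrite !mulr0 !subr0 !addr0 !mul0r !subr0 mul1r in k1.
  nra.
- nra.
Qed.


Lemma cos_nat (n : nat) (a : R) : cos (a + 2 * pi * n%:R) = cos a.
Proof.
have := periodicn (@cosD2pi R) n a.
by rewrite (_ : pi *+ 2 *+ n = 2 * pi * n%:R) // -mulrnA -[LHS]mulr_natr natrM; ring.
Qed.

Lemma cos_int (k : int) (a : R) : cos (a + 2 * pi * k%:~R) = cos a.
Proof.
case: k => n; first by rewrite -pmulrn cos_nat.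
rewrite NegzE mulrNz.
have := cos_nat n.+1 (a - 2 * pi * n.+1%:R).
rewrite subrK => e; rewrite [RHS]e; congr cos; rewrite -pmulrn; ring.
Qed.

Lemma cos_eq1_int (z : R) : cos (2 * pi * z) = 1 -> exists k : int, z = k%:~R.
Proof.
move=> h; exists (Num.floor z).
set k := Num.floor z.
have k1 : k%:~R <= z := floor_le z.
have k2 : z < (k + 1)%:~R := floorD1_gt z.
rewrite intrD in k2.
set r := z - k%:~R.
have r0 : 0 <= r by rewrite /r subr_ge0.
have r1 : r < 1 by rewrite /r; lra.
have hr : cos (2 * pi * r) = 1.
  rewrite -(cos_int k (2 * pi * r)); apply: eq_trans h; congr cos; rewrite /r; ring.
have [r00|rn0] := eqVneq r 0; first by move: r00; rewrite /r; lra.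
have rpos : 0 < r by rewrite lt_def rn0 r0.
exfalso.
have spos : 0 < sin (pi * r).
  apply: sin_gt0_pi; rewrite mulr_gt0 ?pi_gt0 //=.
  by rewrite -[ltRHS]mulr1 ltr_pM2l // pi_gt0.
have : cos ((pi * r) *+ 2) = 1 by rewrite -hr; congr cos; rewrite mulr2n; ring.
rewrite cos_mulr2n cos2sin2 => e.
nra.
Qed.


Lemma real_root (mu : R) : exists t : R, t ^+ 3 - t + mu = 0.
Proof.
pose f (t : R) := t * t * t - t + mu.
have df : forall x : R, derivable f x 1.
  move=> x; have : is_derive x 1 f (x * x * 1 + x * x * 1 + x * x * 1 - 1 + 0).
    apply: is_derive_eq; rewrite /f; dtac.
    by rewrite /GRing.scale /=; ring.
  by case.
set M := `|mu| + 1.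
have hm : - `|mu| <= mu <= `|mu| by rewrite -ler_norml.
have m0 : 0 <= `|mu| by [].
have [c _ hc] : exists2 c, c \in `[- M, M] & f c = 0.
  apply: IVT.
  - by rewrite /M; lra.
  - by apply: derivable_within_continuous => x _; exact: df.
  - have h1 : f (- M) <= 0 by rewrite /f /M; nra.
    have h2 : 0 <= f M by rewrite /f /M; nra.
    by rewrite ge_min le_max h1 h2 orbT.
by exists c; move: hc; rewrite /f => <-; ring.
Qed.

Lemma rot_same (C1 S1 C2 S2 A B : R) : 0 < A ^+ 2 + B ^+ 2 ->
  C1 * A - S1 * B = C2 * A - S2 * B -> S1 * A + C1 * B = S2 * A + C2 * B ->
  C1 = C2 /\ S1 = S2.
Proof.
move=> hp e1 e2.
have h : ((C1 - C2) ^+ 2 + (S1 - S2) ^+ 2) * (A ^+ 2 + B ^+ 2) = 0.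
  transitivity (((C1 * A - S1 * B) - (C2 * A - S2 * B)) ^+ 2 +
                ((S1 * A + C1 * B) - (S2 * A + C2 * B)) ^+ 2); first by ring.
  by rewrite e1 e2 !subrr expr0n /= addr0.
move/eqP: h; rewrite mulf_eq0 (gt_eqF hp) orbF => /eqP h.
have a := sqr_ge0 (C1 - C2); have b := sqr_ge0 (S1 - S2).
have ha : (C1 - C2) ^+ 2 = 0 by lra.
have hb : (S1 - S2) ^+ 2 = 0 by lra.
move/eqP: ha; rewrite sqrf_eq0 subr_eq0 => /eqP ->.
by move/eqP: hb; rewrite sqrf_eq0 subr_eq0 => /eqP ->.
Qed.


Lemma no_eig mu u u1 u2 v v1 v2 : mu != 0 -> sys mu u u1 u2 v v1 v2 ->
  u 0 = 0 -> v 0 = 0 -> u L = 0 -> v L = 0 -> u1 L = 0 -> v1 L = 0 ->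
  forall x, I x -> u x = 0 /\ v x = 0.
Proof.
move=> mu0 H z1 z2 z3 z4 z5 z6.
have [z7 z8] := energy H z1 z2 z3 z4 z5 z6.
have [t1 ht1] := real_root mu.
have hmu : mu = t1 - t1 ^+ 3 by lra.
have rot t : t ^+ 3 - t + mu = 0 ->
    u2 0 = cos (t * L) * u2 L - sin (t * L) * v2 L /\
    v2 0 = sin (t * L) * u2 L + cos (t * L) * v2 L.
  move=> ht.
  have hc : (0 : R) ^+ 3 - 3 * 0 * t ^+ 2 = - 0 by ring.
  have hd : 3 * (0 : R) ^+ 2 * t - t ^+ 3 = mu - t by lra.
  have := rot_eq H z1 z7 z2 z8 z3 z5 z4 z6 hc hd.
  by rewrite mul0r expR0 !mul1r.
have [[b1 b2] [AB0|ABn]] : (u2 0 = cos (t1 * L) * u2 L - sin (t1 * L) * v2 L /\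
    v2 0 = sin (t1 * L) * u2 L + cos (t1 * L) * v2 L) /\
    ((u2 L = 0 /\ v2 L = 0) \/ 0 < u2 L ^+ 2 + v2 L ^+ 2).
  split; first exact: rot.
  have [A0|An] := eqVneq (u2 L) 0.
    have [B0|Bn] := eqVneq (v2 L) 0; first by left.
    by right; rewrite A0 expr0n /= add0r lt_def sqr_ge0 sqrf_eq0 Bn.
  right; rewrite ltr_pwDl ?sqr_ge0 //.
  by rewrite lt_def sqr_ge0 sqrf_eq0 An.
- case: AB0 => A0 B0.
  rewrite A0 B0 !mulr0 subrr in b1; rewrite A0 B0 !mulr0 addr0 in b2.
  move=> x xI.
  have := uniq3 H z1 z7 b1 z2 z8 b2 xI.
  by case=> -> [_ [_ [-> _]]].
- exfalso.
  pose D := 4 - 3 * t1 ^+ 2.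
  have [hD|hD] := ltrP D 0.
  + pose c := Num.sqrt (- D) / 2; pose d := - t1 / 2.
    have hs : Num.sqrt (- D) ^+ 2 = - D by rewrite sqr_sqrtr // oppr_ge0 ltW.
    have hc2 : c ^+ 2 = - D / 4 by rewrite /c expr_div_n hs; field.
    have hc : c ^+ 3 - 3 * c * d ^+ 2 = - c.
      rewrite (_ : c ^+ 3 = c * c ^+ 2); last by ring.
      by rewrite hc2 /d /D; field.
    have hd : 3 * c ^+ 2 * d - d ^+ 3 = mu - d.
      by rewrite hc2 hmu /d /D; field.
    have [b1' b2'] := rot_eq H z1 z7 z2 z8 z3 z5 z4 z6 hc hd.
    set A := u2 L in b1 b2 b1' b2' ABn; set B := v2 L in b1 b2 b1' b2' ABn.
    set e := expR (c * L) in b1' b2'.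
    have N1 : u2 0 ^+ 2 + v2 0 ^+ 2 = A ^+ 2 + B ^+ 2.
      rewrite b1 b2; transitivity ((cos (t1 * L) ^+ 2 + sin (t1 * L) ^+ 2) * (A ^+ 2 + B ^+ 2)).
        by ring.
      by rewrite cos2Dsin2 mul1r.
    have N2 : u2 0 ^+ 2 + v2 0 ^+ 2 = e ^+ 2 * (A ^+ 2 + B ^+ 2).
      rewrite b1' b2'; transitivity (e ^+ 2 * (cos (d * L) ^+ 2 + sin (d * L) ^+ 2) * (A ^+ 2 + B ^+ 2)).
        by ring.
      by rewrite cos2Dsin2 mulr1.
    have e2 : (e ^+ 2 - 1) * (A ^+ 2 + B ^+ 2) = 0.
      by rewrite mulrBl -N2 N1 mul1r subrr.
    move/eqP: e2; rewrite mulf_eq0 (gt_eqF ABn) orbF subr_eq0 => /eqP e2.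
    have ep : 0 < e by exact: expR_gt0.
    have e1 : e = 1 by nra.
    have : c * L = 0 by apply: expR_inj; rewrite expR0.
    move/eqP; rewrite mulf_eq0 (gt_eqF L_gt0) orbF /c mulf_eq0 invr_eq0 pnatr_eq0 orbF.
    by rewrite sqrtr_eq0 oppr_le0 leNgt hD.
  + pose s := Num.sqrt D.
    have hs : s ^+ 2 = D by rewrite sqr_sqrtr.
    pose t2 := (- t1 + s) / 2; pose t3 := (- t1 - s) / 2.
    have ht2 : t2 ^+ 3 - t2 + mu = 0.
      rewrite hmu; transitivity ((t2 - t1) * (s ^+ 2 - D) / 4).
        by rewrite /t2 /D; field.
      by rewrite hs subrr mulr0 mul0r.
    have ht3 : t3 ^+ 3 - t3 + mu = 0.
      rewrite hmu; transitivity ((t3 - t1) * (s ^+ 2 - D) / 4).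
        by rewrite /t3 /D; field.
      by rewrite hs subrr mulr0 mul0r.
    have intk t : t ^+ 3 - t + mu = 0 -> exists k : int, t1 - t = k%:~R.
      move=> ht; have [c1 c2] := rot t ht.
      have [eC eS] := rot_same ABn (etrans (esym b1) c1) (etrans (esym b2) c2).
      apply: cos_eq1_int.
      rewrite (_ : 2 * pi * (t1 - t) = t1 * L - t * L); last by rewrite /Lper; ring.
      by rewrite cosB -eC -eS -!expr2 cos2Dsin2.
    have [k2 hk2] := intk _ ht2.
    have [k3 hk3] := intk _ ht3.
    have hi : 3 * (k3 - k2) ^+ 2 + (- (k2 + k3)) ^+ 2 = 12 :> int.
      apply: (@intr_inj R).
      rewrite !(intrD, intrM, intrB, intrN, rmorphXn, rmorph_nat) -hk2 -hk3 /=.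
      rewrite /t2 /t3; move: hs; rewrite /D => hs'; nra.
    have := congr1 (fun z : int => z%:~R : R) (intl hi).
    rewrite /= !(intrD, intrM, intrB, intrN, rmorphXn, rmorph_nat) -hk2 -hk3 /= rmorph0.
    rewrite /t2 /t3 => h.
    move/eqP: mu0; apply; rewrite hmu.
    apply/eqP; nra.
Qed.


End Proof1.

Section Proof2.
Variable R : realType.
Local Notation leb := (@lebesgue_measure R).
Local Notation L := (Lper R).
Local Notation I := (@I0L R).
Ltac dtac2 := repeat first [ apply: iD | apply: iM | apply: iN | apply: iC | apply: iI | eassumption ].
Ltac cwtac2 := repeat first [ apply: CwD | apply: CwM | apply: CwN | apply: Cw_cst | eassumption ].

Lemma ftc2 F f : Cw F -> Cw f -> Dr F f ->
  forall x, I x -> F x = F 0 + \int[leb]_(t in `[0, x]) f t.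
Proof.
move=> cF cf dF.
pose G x := F 0 + \int[leb]_(t in `[0, x]) f t.
have cG : Cw G by apply: (int_Cw (Cw_integrable cf)).
have dG : Dr G f by apply: (Dr_int cf).
pose H x := F x - G x.
have cH : Cw H by exact: CwB.
have dH : Dr H (fun=> 0).
  move=> x xin; have := iD (dF x xin) (iN (dG x xin)).
  by rewrite subrr.
move=> x xI; have := const cH dH xI.
rewrite /H /G set_itv1 Rintegral_set1 addr0 subrr => /eqP.
by rewrite subr_eq0 => /eqP.
Qed.

Lemma Cw_cos : Cw (@cos R).
Proof. by apply: Cw_deriv => x; exact: derivable_cos. Qed.
Lemma Cw_sin : Cw (@sin R).
Proof. by apply: Cw_deriv => x; exact: derivable_sin. Qed.

Lemma L2pi : L = pi *+ 2.
Proof. by rewrite /Lper mulr2n mulrDl mul1r. Qed.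

Lemma ker_in a : A_graph (fun x : R => a * (1 - cos x)) (fun=> 0).
Proof.
have cc := Cw_cos; have cs := Cw_sin.
have c0 : Cw (fun x => a * (1 - cos x)).
  cwtac2.
have c1 : Cw (fun x => a * sin x) by cwtac2.
have c2 : Cw (fun x => a * cos x) by cwtac2.
have c3 : Cw (fun x => - (a * sin x)) by cwtac2.
exists (fun x => a * sin x), (fun x => a * cos x), (fun x => - (a * sin x)).
split; last split; [|by rewrite cos0 subrr mulr0|split; [by rewrite L2pi cos2pi subrr mulr0|split]].
- split.
    split.
      by case/integrableP: (Cw_integrable c3) => /measurable_EFinP.
    have c4 : Cw (fun x => - (a * sin x) * - (a * sin x)) by cwtac2.
    case/integrableP: (Cw_integrable c4) => _.
    apply: le_lt_trans; rewrite le_eqVlt; apply/orP; left; apply/eqP.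
    apply: eq_integral => x _ /=; rewrite expr2 ger0_norm //.
    by rewrite -expr2 sqr_ge0.
  split; first exact: Cw_integrable c3.
  split; first exact: Cw_integrable c2.
  split; first exact: Cw_integrable c1.
  have hs x : x \in `]0, L[ -> is_derive x 1 sin (cos x) by move=> _; exact: is_derive_sin.
  have hc x : x \in `]0, L[ -> is_derive x 1 cos (- sin x) by move=> _; exact: is_derive_cos.
  split; [|split].
  + apply: ftc2 => // x xin; have := iM (iC x a) (hc x xin).
    by rewrite mul0r add0r mulrN.
  + apply: ftc2 => // x xin; have := iM (iC x a) (hs x xin).
    by rewrite mul0r add0r.
  + apply: ftc2 => // x xin; have := iM (iC x a) (iD (iC x 1) (iN (hc x xin))).
    by rewrite mul0r add0r add0r opprK.
- by rewrite L2pi sin2pi mulr0.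
- by apply: aeW => x _; rewrite subrr.
Qed.


Lemma DrZ0 : Dr (fun=> (0 : R)) (fun=> 0).
Proof. by move=> x _; exact: iC. Qed.

Lemma ker_char phi : A_graph phi (fun=> 0) ->
  exists a : R, forall x, I x -> phi x = a * (1 - cos x).
Proof.
move=> [p1 [p2 [p3 [H [z0 [zL [z1L ae]]]]]]].
have [cp2 cp1 cp dp1 dp] := reg H.
have dp2 := reg2 H (@Cw_cst R 0) ae.
have cc := Cw_cos; have cs := Cw_sin.
pose k := p2 0; pose b := p1 0.
pose q x := phi x - (k * (1 - cos x) + b * sin x).
pose q1 x := p1 x - (k * sin x + b * cos x).
pose q2 x := p2 x - (k * cos x - b * sin x).
have hs (x : R) : is_derive x 1 sin (cos x) by exact: is_derive_sin.
have hc (x : R) : is_derive x 1 cos (- sin x) by exact: is_derive_cos.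
have S : sys 0 q q1 q2 (fun=> 0) (fun=> 0) (fun=> 0).
  split.
    split; first by rewrite /q; cwtac2.
    split; first by rewrite /q1; cwtac2.
    split; first by rewrite /q2; cwtac2.
    by split; [exact: Cw_cst|split; exact: Cw_cst].
  split.
    move=> x xin; have := dp x xin; have := hs x; have := hc x => ? ? ?.
    by apply: is_derive_eq; rewrite /q; dtac2; rewrite /q1 /GRing.scale /=; ring.
  split.
    move=> x xin; have := dp1 x xin; have := hs x; have := hc x => ? ? ?.
    by apply: is_derive_eq; rewrite /q1; dtac2; rewrite /q2 /GRing.scale /=; ring.
  split.
    move=> x xin; have := dp2 x xin; have := hs x; have := hc x => ? ? ?.
    by apply: is_derive_eq; rewrite /q2; dtac2; rewrite /q1 /GRing.scale /=; ring.
  split; first exact: DrZ0.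
  split; first exact: DrZ0.
  by move=> x _; have := iC x (0 : R); rewrite (_ : - 0 * q x - 0 = 0) //; ring.
have q0 : q 0 = 0 by rewrite /q z0 cos0 sin0 subrr; ring.
have q10 : q1 0 = 0 by rewrite /q1 cos0 sin0 /b; ring.
have q20 : q2 0 = 0 by rewrite /q2 cos0 sin0 /k; ring.
have U := uniq3 S q0 q10 q20 erefl erefl erefl.
have [_ [hL _]] := U L (@L_I R).
move: hL; rewrite /q1 z1L L2pi sin2pi cos2pi => hb.
have b0 : b = 0 by lra.
exists k => x xI; have [hx _] := U x xI.
by move: hx; rewrite /q b0 => hx; lra.
Qed.

Lemma ae_not0 a : a != 0 -> ~ aeq (fun x : R => a * (1 - cos x)) (fun=> 0).
Proof.
move=> a0 [N [mN N0 sub]].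
have hp := pi_gt0 R.
have J : `[pi / 2, pi] `<=` N.
  move=> x xin; have [h1 h2] : pi / 2 <= x /\ x <= pi.
    by move: xin; rewrite /= in_itv /= => /andP.
  apply: sub => /=; apply/not_implyP; split.
    rewrite /I0L /= in_itv /= L2pi mulr2n; apply/andP; split; lra.
  move/eqP; rewrite mulf_eq0 (negbTE a0) /= subr_eq0 => /eqP h.
  have : 0 <= cos (x - pi).
    apply: cos_ge0_pihalf; apply/andP; split; lra.
  rewrite cosB cospi sinpi mulrN1 mulr0 addr0 -h.
  lra.
have := le_measure leb (mem_set (measurable_itv `[pi / 2, pi])) (mem_set mN) J.
move=> h.
have h2 : (leb `[(pi / 2)%R, pi] <= 0)%E.
  by apply: (le_trans h); rewrite le_eqVlt; apply/orP; left; apply/eqP; exact: N0.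
clear h; move: h2; rewrite lebesgue_measure_itv /= lte_fin.
have -> : ((pi : R) / 2 < pi)%R by clear -hp; lra.
by rewrite lee_fin => hh; clear -hh hp; lra.
Qed.

End Proof2.

Theorem lemma2p6 (R : realType) :
  (* sigma_p(A) ∩ iR = {0} *)
  (forall mu : R, imag_eigenvalue mu <-> mu = 0) /\
  (* ker A = { a (1 - cos x) : a in R } *)
  (forall phi : R -> R, A_graph phi (fun=> 0) ->
     exists a : R, forall x, I0L x -> phi x = a * (1 - cos x)) /\
  (forall a : R, A_graph (fun x : R => a * (1 - cos x)) (fun=> 0)).
Proof.
split; last by split; [exact: ker_char | exact: ker_in].
move=> mu; split.
- move=> [u [v [nz [Hu Hv]]]].
  apply/eqP; apply: contraT => mu0; exfalso; apply: nz.
  move: Hu Hv => [u1 [u2 [u3 [Hu3 [u0 [uL [u1L aeu]]]]]]] [v1 [v2 [v3 [Hv3 [v0 [vL [v1L aev]]]]]]].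
  have [cu2 cu1 cu du1 du] := reg Hu3.
  have [cv2 cv1 cv dv1 dv] := reg Hv3.
  have du2 := reg2 Hu3 (CwZ (c := - mu) cv) aeu.
  have dv2 := reg2 Hv3 (CwZ (c := mu) cu) aev.
  have S : sys mu u u1 u2 v v1 v2.
    split; first by do !split.
    do 2 (split; first by []).
    split; first by apply: (DrE du2) => x _; ring.
    do 2 (split; first by []).
    by apply: (DrE dv2) => x _; ring.
  have Z := no_eig mu0 S u0 v0 uL vL u1L v1L.
  by split; apply: aeW => x xI; case: (Z x xI).
- move=> ->.
  exists (fun x => 1 * (1 - cos x)), (fun x => 0 * (1 - cos x)).
  split; first by move=> [h _]; exact: (ae_not0 (oner_neq0 R) h).
  split.
  + rewrite (_ : (fun x => - 0 * (0 * (1 - cos x))) = (fun=> 0)); first exact: ker_in.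
    by apply: boolp.funext => x; ring.
  + rewrite (_ : (fun x => 0 * (1 * (1 - cos x))) = (fun=> 0)); first exact: ker_in.
    by apply: boolp.funext => x; ring.
Qed.
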